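(* (Selection theorem.) Let $S\colon[0,1]\to\mathfrak S_1(\mathbb T)$ be a continuous path with $S(0)=\mathbf 1$. Then there exists a sequence of continuous functions $z_j\colon[0,1]\to\mathbb T$, $j=1,2,\dots$, such that $z_j(0)=1$ for all $j$ and, for every $r\in[0,1]$, the sequence $(z_1(r),z_2(r),\dots)$ is an enumeration of $S(r)$.
   Context: A rigged subset $S$ of a set $X$ assigns to each $x\in X$ a multiplicity $\mathrm{mult}(x;S)\in\{0,1,2,\dots,\infty\}$; an enumeration of a countable rigged set is a sequence in which each $x$ appears exactly $\mathrm{mult}(x;S)$ times. For a metric space $X$ with base point $x_0$, $\mathfrak S_\infty(X)$ is the set of countable rigged subsets of $X$ in which $x_0$ has multiplicity $\infty$ and which have no accumulation point other than $x_0$ (an accumulation point being a point every neighbourhood of which contains infinitely many elements counting multiplicity). For $S,T\in\mathfrak S_\infty(X)$, $d(S,T)=\inf\sum_{j}\mathrm{dist}(s_j,t_j)$ over all enumerations $(s_j)$, $(t_j)$ of $S$ and $T$. $\mathbf x_0$ denotes the rigged set consisting only of $x_0$ with infinite multiplicity, and $\mathfrak S_1(X)=\{S\in\mathfrak S_\infty(X):d(S,\mathbf x_0)<\infty\}$, a metric space with metric $d$. Here $X=\mathbb T$ (unit circle, arc-length metric) with base point $1$, so $\mathbf 1$ is the rigged set with only the point $1$ of infinite multiplicity. *)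

(* Defs.v *)
From Stdlib Require Import Reals List ClassicalEpsilon.
From Coquelicot Require Import Coquelicot.
Open Scope R_scope.

Definition Tpt := {p : R * R | (fst p) ^ 2 + (snd p) ^ 2 = 1}.

Definition Tone : Tpt.
Proof. exists (1, 0). simpl. ring. Defined.

Definition tdist (p q : Tpt) : R :=
  acos (fst (proj1_sig p) * fst (proj1_sig q) + snd (proj1_sig p) * snd (proj1_sig q)).

(** Multiplicities in {0,1,2,...,oo}: [Some n] = n, [None] = oo. *)
Definition mult_t := option nat.

Definition rigged := Tpt -> mult_t.

Definition is_enumeration (S : rigged) (z : nat -> Tpt) : Prop :=
  forall x : Tpt,
    match S x with
    | None => forall N : nat, exists j : nat, (N <= j)%nat /\ z j = x
    | Some n => exists l : list nat,
        NoDup l /\ length l = n /\ (forall j : nat, In j l <-> z j = x)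
    end.

Definition rigged_countable (S : rigged) : Prop :=
  exists f : Tpt -> nat, forall x y : Tpt,
    S x <> Some 0%nat -> S y <> Some 0%nat -> f x = f y -> x = y.

Definition finitely_many_in_ball (S : rigged) (x : Tpt) (e : R) : Prop :=
  exists l : list Tpt, forall y : Tpt, tdist x y < e ->
    S y <> None /\ (S y <> Some 0%nat -> In y l).

Definition accumulation_point (S : rigged) (x : Tpt) : Prop :=
  forall e : R, 0 < e -> ~ finitely_many_in_ball S x e.

Definition in_S_infty (S : rigged) : Prop :=
  S Tone = None /\ rigged_countable S /\
  (forall x : Tpt, accumulation_point S x -> x = Tone).

Definition enum_cost (s t : nat -> Tpt) : Rbar :=
  Lim_seq (fun N => sum_n (fun j => tdist (s j) (t j)) N).

Definition rdist (S T : rigged) : Rbar :=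
  Rbar_glb (fun c : Rbar => exists s t : nat -> Tpt,
    is_enumeration S s /\ is_enumeration T t /\ c = enum_cost s t).

Definition rigged_one : rigged :=
  fun x => if excluded_middle_informative (x = Tone) then None else Some 0%nat.

Definition in_S1 (S : rigged) : Prop :=
  in_S_infty S /\ Rbar_lt (rdist S rigged_one) p_infty.

(* Main.v *)
Require Import Defs.
From Stdlib Require Import Reals List Lra Lia ZArith ClassicalEpsilon ProofIrrelevance Classical.
From Coquelicot Require Import Coquelicot.
Open Scope R_scope.
Open Scope R_scope.

Lemma Tpt_eq (x y : Tpt) : proj1_sig x = proj1_sig y -> x = y.
Proof.
  destruct x as [p hp], y as [q hq]; simpl; intros ->.
  f_equal; apply proof_irrelevance.
Qed.

Definition pt (t : R) : Tpt.
Proof. exists (cos t, sin t). simpl. pose proof (sin2_cos2 t). unfold Rsqr in H. nra. Defined.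

Lemma tdist_pt a b : tdist (pt a) (pt b) = acos (cos (a - b)).
Proof. unfold tdist; simpl. rewrite cos_minus. reflexivity. Qed.

Lemma pt0 : pt 0 = Tone.
Proof. apply Tpt_eq; simpl. rewrite cos_0, sin_0. reflexivity. Qed.

Lemma acos_cos_abs d : Rabs d <= PI -> acos (cos d) = Rabs d.
Proof.
  intros H. destruct (Rle_dec 0 d).
  - rewrite Rabs_pos_eq by lra. apply acos_cos. split; auto. rewrite Rabs_pos_eq in H; lra.
  - rewrite Rabs_left by lra. rewrite <- cos_neg. apply acos_cos. rewrite Rabs_left in H; lra.
Qed.

Lemma acos_cos_big d : PI <= Rabs d <= 2 * PI -> acos (cos d) = 2 * PI - Rabs d.
Proof.
  intros H. assert (E : cos d = cos (2 * PI - Rabs d)).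
  { rewrite cos_minus, cos_2PI, sin_2PI.
    destruct (Rle_dec 0 d).
    - rewrite Rabs_pos_eq by lra. ring.
    - rewrite Rabs_left by lra. rewrite cos_neg. ring. }
  rewrite E. apply acos_cos. lra.
Qed.

Lemma acos_cos_le d : acos (cos d) <= Rabs d.
Proof.
  destruct (Rle_dec (Rabs d) PI).
  - rewrite acos_cos_abs; lra.
  - pose proof (acos_bound (cos d)). lra.
Qed.

Lemma tdist_pos x y : 0 <= tdist x y.
Proof. unfold tdist. apply acos_bound. Qed.
Lemma tdist_le_PI x y : tdist x y <= PI.
Proof. unfold tdist. apply acos_bound. Qed.
Lemma tdist_sym x y : tdist x y = tdist y x.
Proof. unfold tdist. f_equal. ring. Qed.
Lemma tdist_refl x : tdist x x = 0.
Proof.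
  unfold tdist. destruct x as [[p q] h]; simpl in *.
  replace (p*p+q*q) with 1 by (simpl in h; lra). apply acos_1.
Qed.

Lemma cos_sin_shift t (n : Z) : cos (t + 2 * PI * IZR n) = cos t /\ sin (t + 2 * PI * IZR n) = sin t.
Proof.
  destruct (Z_le_gt_dec 0 n) as [h|h].
  - rewrite <- (Z2Nat.id n) by lia. rewrite <- INR_IZR_INZ.
    replace (t + 2 * PI * INR (Z.to_nat n)) with (t + 2 * INR (Z.to_nat n) * PI) by ring.
    split; [apply cos_period|apply sin_period].
  - assert (Hm : (0 <= - n)%Z) by lia.
    pose proof (cos_period (t + 2 * PI * IZR n) (Z.to_nat (- n))) as A.
    pose proof (sin_period (t + 2 * PI * IZR n) (Z.to_nat (- n))) as B.
    rewrite INR_IZR_INZ, Z2Nat.id in A, B by lia. rewrite opp_IZR in A, B.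
    replace (t + 2 * PI * IZR n + 2 * - IZR n * PI) with t in A, B by ring.
    split; auto.
Qed.

Lemma pt_exists0 (x : Tpt) : exists t, -PI <= t <= PI /\ x = pt t.
Proof.
  destruct x as [[p q] h]; simpl in h.
  assert (Hp : -1 <= p <= 1) by nra.
  assert (Hs : sqrt (1 - p²) = Rabs q).
  { replace (1 - p²) with (q²) by (unfold Rsqr; lra). apply sqrt_Rsqr_abs. }
  pose proof (acos_bound p).
  destruct (Rle_dec 0 q).
  - exists (acos p). split; [lra|]. apply Tpt_eq; simpl.
    rewrite cos_acos, sin_acos, Hs, Rabs_pos_eq; auto.
  - exists (- acos p). split; [lra|]. apply Tpt_eq; simpl.
    rewrite cos_neg, sin_neg, cos_acos, sin_acos, Hs, Rabs_left by lra; auto. f_equal; lra.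
Qed.

Lemma pt_shift t n : pt (t + 2 * PI * IZR n) = pt t.
Proof. apply Tpt_eq; simpl. destruct (cos_sin_shift t n) as [A B]. rewrite A, B; auto. Qed.

Lemma pt_exists (x : Tpt) (c : R) : exists t, c - 2 * PI < t <= c /\ x = pt t.
Proof.
  destruct (pt_exists0 x) as [t0 [_ ->]].
  pose proof PI_RGT_0.
  set (u := (c - t0) / (2 * PI)).
  destruct (archimed u) as [A B].
  exists (t0 + 2 * PI * IZR (up u - 1)). split.
  - rewrite minus_IZR. unfold u in *.
    assert (E : (c - t0) = 2 * PI * ((c - t0) / (2 * PI))) by (field; lra).
    split; nra.
  - rewrite pt_shift; auto.
Qed.

Lemma pt_inj a b : Rabs (a - b) < 2 * PI -> pt a = pt b -> a = b.
Proof.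
  intros H E. assert (T : tdist (pt a) (pt b) = 0) by (rewrite E; apply tdist_refl).
  rewrite tdist_pt in T. destruct (Rle_dec (Rabs (a - b)) PI).
  - rewrite acos_cos_abs in T by lra. destruct (Rle_dec 0 (a-b)).
    + rewrite Rabs_pos_eq in T; lra.
    + rewrite Rabs_left in T; lra.
  - rewrite acos_cos_big in T by lra. lra.
Qed.

Lemma tdist_triangle x y z : tdist x z <= tdist x y + tdist y z.
Proof.
  destruct (pt_exists y PI) as [b [_ ->]].
  destruct (pt_exists x (b + PI)) as [a [Ha ->]].
  destruct (pt_exists z (b + PI)) as [c [Hc ->]].
  rewrite !tdist_pt.
  rewrite (acos_cos_abs (a - b)) by (apply Rabs_le; lra).
  rewrite (acos_cos_abs (b - c)) by (apply Rabs_le; lra).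
  eapply Rle_trans. apply acos_cos_le.
  replace (a - c) with ((a - b) + (b - c)) by ring. apply Rabs_triang.
Qed.

Lemma tdist_pt_le a b : tdist (pt a) (pt b) <= Rabs (a - b).
Proof. rewrite tdist_pt. apply acos_cos_le. Qed.

Lemma tdist_pt_eq_small a b : Rabs (a - b) <= 2 * PI -> tdist (pt a) (pt b) < PI -> 
  tdist (pt a) (pt b) = Rabs (a - b) \/ tdist (pt a) (pt b) = 2 * PI - Rabs (a - b).
Proof.
  intros H _. rewrite tdist_pt. destruct (Rle_dec (Rabs (a - b)) PI).
  - left; apply acos_cos_abs; lra.
  - right; apply acos_cos_big; lra.
Qed.

Open Scope nat_scope.

Definition decb (P : Prop) : bool := if excluded_middle_informative P then true else false.
Lemma decb_true P : decb P = true <-> P.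
Proof. unfold decb; destruct excluded_middle_informative; split; auto; discriminate. Qed.
Lemma decb_false P : decb P = false <-> ~ P.
Proof. unfold decb; destruct excluded_middle_informative; split; auto; try discriminate; tauto. Qed.

Definition ncnt (Q : nat -> Prop) (M : nat) : nat := length (filter (fun j => decb (Q j)) (seq 0 M)).
Definition bnd (Q : nat -> Prop) M := forall j, Q j -> j < M.
Definition fin (Q : nat -> Prop) := exists M, bnd Q M.
Definition inf (Q : nat -> Prop) := forall N, exists j, N <= j /\ Q j.

Lemma ncnt_0 Q : ncnt Q 0 = 0.
Proof. reflexivity. Qed.
Lemma ncnt_S Q M : ncnt Q (S M) = ncnt Q M + (if decb (Q M) then 1 else 0).
Proof.
  unfold ncnt. rewrite seq_S, filter_app, length_app. simpl.
  destruct (decb (Q M)); simpl; lia.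
Qed.
Lemma ncnt_S_true Q M : Q M -> ncnt Q (S M) = S (ncnt Q M).
Proof. intro h. rewrite ncnt_S. replace (decb (Q M)) with true by (symmetry; apply decb_true; auto). lia. Qed.
Lemma ncnt_S_false Q M : ~ Q M -> ncnt Q (S M) = ncnt Q M.
Proof. intro h. rewrite ncnt_S. replace (decb (Q M)) with false by (symmetry; apply decb_false; auto). lia. Qed.

Lemma ncnt_ext Q Q' M : (forall j, j < M -> (Q j <-> Q' j)) -> ncnt Q M = ncnt Q' M.
Proof.
  induction M; intros H; auto. rewrite !ncnt_S, IHM by (intros; apply H; lia).
  destruct (classic (Q M)).
  - rewrite (proj2 (decb_true _) H0), (proj2 (decb_true _)) by (apply H; auto). auto.
  - rewrite (proj2 (decb_false _) H0), (proj2 (decb_false _)) by (rewrite <- H; auto). auto.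
Qed.

Lemma ncnt_mono Q Q' M : (forall j, j < M -> Q j -> Q' j) -> ncnt Q M <= ncnt Q' M.
Proof.
  induction M; intros H; auto. rewrite !ncnt_S.
  assert (IH := IHM (fun j hj => H j (Nat.lt_lt_succ_r _ _ hj))).
  destruct (classic (Q M)).
  - rewrite (proj2 (decb_true _) H0), (proj2 (decb_true _)) by (apply H; auto). lia.
  - rewrite (proj2 (decb_false _) H0). destruct (decb (Q' M)); lia.
Qed.

Lemma ncnt_le_M Q M : ncnt Q M <= M.
Proof. induction M; auto. rewrite ncnt_S. destruct decb; lia. Qed.

Lemma ncnt_monoM Q M M' : M <= M' -> ncnt Q M <= ncnt Q M'.
Proof. induction 1; auto. rewrite ncnt_S. destruct decb; lia. Qed.

Lemma ncnt_bnd Q M M' : bnd Q M -> M <= M' -> ncnt Q M' = ncnt Q M.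
Proof.
  intros B; induction 1; auto. rewrite ncnt_S_false; auto. intro h; apply B in h; lia.
Qed.

Lemma ncnt_add Q Q' M : (forall j, Q j -> Q' j -> False) ->
  ncnt (fun j => Q j \/ Q' j) M = ncnt Q M + ncnt Q' M.
Proof.
  intros D. induction M; auto. rewrite !ncnt_S, IHM.
  destruct (classic (Q M)); destruct (classic (Q' M)).
  - exfalso; eauto.
  - rewrite (proj2 (decb_true (Q M)) H), (proj2 (decb_false (Q' M)) H0), (proj2 (decb_true _)) by auto. lia.
  - rewrite (proj2 (decb_false (Q M)) H), (proj2 (decb_true (Q' M)) H0), (proj2 (decb_true _)) by auto. lia.
  - rewrite (proj2 (decb_false (Q M)) H), (proj2 (decb_false (Q' M)) H0), (proj2 (decb_false _)) by tauto. lia.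
Qed.

Definition cnt (Q : nat -> Prop) : nat :=
  match excluded_middle_informative (fin Q) with
  | left h => ncnt Q (proj1_sig (constructive_indefinite_description _ h))
  | right _ => 0
  end.

Lemma cnt_eq Q M : bnd Q M -> cnt Q = ncnt Q M.
Proof.
  intros B. unfold cnt. destruct excluded_middle_informative as [h|h].
  - destruct constructive_indefinite_description as [M' B']; simpl.
    destruct (Nat.le_ge_cases M M').
    + exact (ncnt_bnd Q M M' B H).
    + symmetry; exact (ncnt_bnd Q M' M B' H).
  - exfalso; apply h; exists M; auto.
Qed.

Lemma bnd_mono Q Q' M : bnd Q' M -> (forall j, Q j -> Q' j) -> bnd Q M.
Proof. unfold bnd; eauto. Qed.

Lemma cnt_mono Q Q' : fin Q' -> (forall j, Q j -> Q' j) -> fin Q /\ cnt Q <= cnt Q'.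
Proof.
  intros [M B] H. split. exists M; eapply bnd_mono; eauto.
  rewrite (cnt_eq Q M), (cnt_eq Q' M) by (auto; eapply bnd_mono; eauto).
  apply ncnt_mono; auto.
Qed.

Lemma cnt_ext Q Q' : (forall j, Q j <-> Q' j) -> cnt Q = cnt Q'.
Proof.
  intros H. destruct (classic (fin Q)) as [[M B]|F].
  - assert (B' : bnd Q' M) by (intros j hj; apply B, H; auto).
    rewrite (cnt_eq Q M B), (cnt_eq Q' M B'). apply ncnt_ext; auto.
  - assert (F' : ~ fin Q') by (intros [M B]; apply F; exists M; intros j hj; apply B, H; auto).
    unfold cnt. destruct excluded_middle_informative; [tauto|].
    destruct excluded_middle_informative; [tauto|]. auto.
Qed.

Lemma fin_list Q : fin Q -> exists l, NoDup l /\ length l = cnt Q /\ forall j, In j l <-> Q j.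
Proof.
  intros [M B]. exists (filter (fun j => decb (Q j)) (seq 0 M)). split; [|split].
  - apply NoDup_filter, seq_NoDup.
  - rewrite (cnt_eq Q M); auto.
  - intros j. rewrite filter_In, in_seq, decb_true. split; [tauto|]. intros h; split; auto.
    apply B in h; lia.
Qed.

Lemma list_fin Q l : NoDup l -> (forall j, In j l <-> Q j) -> fin Q /\ cnt Q = length l.
Proof.
  intros N H. set (M := S (fold_right Nat.max 0 l)).
  assert (B : bnd Q M).
  { intros j hj. apply H in hj. unfold M. clear -hj. induction l; simpl in *; [tauto|].
    destruct hj; subst; lia || (apply IHl in H; lia). }
  split. exists M; auto. rewrite (cnt_eq Q M B).
  set (l' := filter (fun j => decb (Q j)) (seq 0 M)).
  assert (E : forall j, In j l' <-> Q j).
  { intros j. unfold l'. rewrite filter_In, in_seq, decb_true. split; [tauto|].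
    intros h; split; auto. apply B in h; lia. }
  unfold ncnt; fold l'. apply Nat.le_antisymm.
  - apply NoDup_incl_length. apply NoDup_filter, seq_NoDup. intros j hj; apply H, E; auto.
  - apply NoDup_incl_length; auto. intros j hj; apply E, H; auto.
Qed.

Lemma inf_not_fin Q : inf Q -> ~ fin Q.
Proof. intros I [M B]. destruct (I M) as [j [h1 h2]]. apply B in h2. lia. Qed.

Lemma not_fin_inf Q : ~ fin Q -> inf Q.
Proof.
  intros F N. apply NNPP; intro C. apply F. exists N. intros j hj.
  destruct (Nat.lt_ge_cases j N); auto. exfalso; apply C; eauto.
Qed.

Lemma inf_ncnt Q : inf Q -> forall k, exists M, k < ncnt Q M.
Proof.
  intros I k. induction k.
  - destruct (I 0) as [j [_ hj]]. exists (S j). rewrite ncnt_S_true; auto. lia.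
  - destruct IHk as [M HM]. destruct (I M) as [j [hj qj]]. exists (S j).
    rewrite ncnt_S_true; auto. pose proof (ncnt_monoM Q M j hj). lia.
Qed.

Lemma ncnt_strict Q i i' : i < i' -> Q i -> ncnt Q i < ncnt Q i'.
Proof. intros h q. pose proof (ncnt_S_true Q i q). pose proof (ncnt_monoM Q (S i) i' h). lia. Qed.

Lemma rank_uniq Q i i' : Q i -> Q i' -> ncnt Q i = ncnt Q i' -> i = i'.
Proof.
  intros h h' E. destruct (Nat.lt_trichotomy i i') as [l|[l|l]]; auto.
  - apply (ncnt_strict Q) in l; auto; lia.
  - apply (ncnt_strict Q) in l; auto; lia.
Qed.

Lemma rank_exists Q k M : k < ncnt Q M -> exists i, i < M /\ Q i /\ ncnt Q i = k.
Proof.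
  induction M; intros h; simpl in h. unfold ncnt in h; simpl in h; lia.
  rewrite ncnt_S in h. destruct (Nat.lt_ge_cases k (ncnt Q M)) as [l|l].
  - destruct (IHM l) as [i [? [? ?]]]. exists i; repeat split; auto.
  - destruct (decb (Q M)) eqn:E; [|lia]. exists M; repeat split; auto. apply decb_true; auto. lia.
Qed.

Open Scope nat_scope.

Lemma enum_char (S : rigged) z : is_enumeration S z <->
  forall x, match S x with
            | None => inf (fun j => z j = x)
            | Some n => fin (fun j => z j = x) /\ cnt (fun j => z j = x) = n end.
Proof.
  split; intros H x; specialize (H x); destruct (S x) as [n|].
  - destruct H as [l [N [L E]]]. destruct (list_fin _ l N E). split; auto; lia.
  - exact H.
  - destruct H as [F C]. destruct (fin_list _ F) as [l [N [L E]]]. exists l; repeat split; auto; try lia; apply E.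
  - exact H.
Qed.

Lemma bound_fun (g : nat -> nat) N : exists B, forall j, j < N -> g j < B.
Proof.
  induction N. exists 0; intros; lia.
  destruct IHN as [B HB]. exists (Nat.max B (S (g N))). intros j hj.
  destruct (Nat.eq_dec j N); subst; [lia|]. specialize (HB j ltac:(lia)). lia.
Qed.

Section Bij.
Variables (pi sg : nat -> nat).
Hypothesis (H1 : forall j, sg (pi j) = j) (H2 : forall i, pi (sg i) = i).

Lemma bij_fin (Q : nat -> Prop) : fin Q -> fin (fun j => Q (pi j)) /\ cnt (fun j => Q (pi j)) = cnt Q.
Proof.
  intros F. destruct (fin_list Q F) as [l [N [L E]]].
  assert (N' : NoDup (map sg l)).
  { apply NoDup_map_NoDup_ForallPairs; auto. intros a b _ _ h. rewrite <- (H2 a), <- (H2 b), h; auto. }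
  destruct (list_fin (fun j => Q (pi j)) (map sg l) N') as [A B].
  { intros j. rewrite in_map_iff. split.
    - intros [i [<- hi]]. rewrite H2. apply E; auto.
    - intros h. exists (pi j). split; auto. apply E; auto. }
  split; auto. rewrite B, length_map; auto.
Qed.

Lemma bij_inf (Q : nat -> Prop) : inf Q -> inf (fun j => Q (pi j)).
Proof.
  intros I. apply not_fin_inf. intros F. apply (inf_not_fin Q I).
  destruct F as [M B]. destruct (bound_fun pi M) as [C HC]. exists C.
  intros i hi. rewrite <- (H2 i). apply HC. apply B. rewrite H2; auto.
Qed.

Lemma bij_enum S f : is_enumeration S f -> is_enumeration S (fun j => f (pi j)).
Proof.
  rewrite !enum_char. intros H x. specialize (H x). destruct (S x).
  - destruct H as [F C]. destruct (bij_fin _ F). split; auto; lia.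
  - apply (bij_inf (fun j => f j = x)); auto.
Qed.
End Bij.

Definition big (Q : nat -> Prop) k := exists M, k < ncnt Q M.

Lemma big_enum (S : rigged) z x k : is_enumeration S z ->
  (big (fun j => z j = x) k <-> match S x with None => True | Some n => k < n end).
Proof.
  rewrite enum_char. intros H. specialize (H x). destruct (S x) as [n|].
  - destruct H as [[M B] C]. rewrite (cnt_eq _ M B) in C. split.
    + intros [M' h]. destruct (Nat.le_ge_cases M M').
      * rewrite (ncnt_bnd _ M M' B H) in h; lia.
      * pose proof (ncnt_monoM (fun j => z j = x) _ _ H). lia.
    + intros h. exists M; lia.
  - split; auto. intros _. apply inf_ncnt; auto.
Qed.

Lemma enum_bij (S : rigged) e f : is_enumeration S e -> is_enumeration S f ->
  exists pi sg : nat -> nat, (forall j, sg (pi j) = j) /\ (forall i, pi (sg i) = i) /\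
    (forall j, f (pi j) = e j).
Proof.
  intros He Hf.
  set (pi := fun j => epsilon (inhabits 0) (fun i => f i = e j /\ ncnt (fun i => f i = e j) i = ncnt (fun i => e i = e j) j)).
  set (sg := fun i => epsilon (inhabits 0) (fun j => e j = f i /\ ncnt (fun j => e j = f i) j = ncnt (fun j => f j = f i) i)).
  assert (Ppi : forall j, f (pi j) = e j /\ ncnt (fun i => f i = e j) (pi j) = ncnt (fun i => e i = e j) j).
  { intros j. unfold pi. apply epsilon_spec.
    assert (Bg : big (fun i => f i = e j) (ncnt (fun i => e i = e j) j)).
    { apply (big_enum S f _ _ Hf). apply (big_enum S e _ _ He). exists (Datatypes.S j).
      rewrite ncnt_S_true; auto. }
    destruct Bg as [M h]. destruct (rank_exists _ _ _ h) as [i [_ [? ?]]]. eauto. }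
  assert (Psg : forall i, e (sg i) = f i /\ ncnt (fun j => e j = f i) (sg i) = ncnt (fun j => f j = f i) i).
  { intros i. unfold sg. apply epsilon_spec.
    assert (Bg : big (fun j => e j = f i) (ncnt (fun j => f j = f i) i)).
    { apply (big_enum S e _ _ He). apply (big_enum S f _ _ Hf). exists (Datatypes.S i).
      rewrite ncnt_S_true; auto. }
    destruct Bg as [M h]. destruct (rank_exists _ _ _ h) as [j [_ [? ?]]]. eauto. }
  exists pi, sg. split; [|split].
  - intros j. destruct (Ppi j) as [A B]. destruct (Psg (pi j)) as [C D].
    rewrite A in C, D. rewrite B in D. apply (rank_uniq (fun i => e i = e j)); auto.
  - intros i. destruct (Psg i) as [A B]. destruct (Ppi (sg i)) as [C D].
    rewrite A in C, D. rewrite B in D. apply (rank_uniq (fun j => f j = f i)); auto.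
  - intros j; apply Ppi.
Qed.

Open Scope R_scope.

Lemma list_min (l : list nat) (P : nat -> Prop) (g : nat -> R) :
  (exists j, In j l /\ P j) -> exists j, In j l /\ P j /\ forall i, In i l -> P i -> g j <= g i.
Proof.
  induction l as [|a l IH]; intros [j [hj pj]]; [destruct hj|].
  destruct (classic (exists j, In j l /\ P j)) as [E|E].
  - destruct (IH E) as [m [hm [pm Hm]]].
    destruct (Rle_dec (g a) (g m)).
    + destruct (classic (P a)).
      * exists a; split; [left; auto|split; auto]. intros i [<-|hi] pi; [lra|]. specialize (Hm i hi pi); lra.
      * exists m; split; [right; auto|split; auto]. intros i [<-|hi] pi; [tauto|]. auto.
    + exists m; split; [right; auto|split; auto]. intros i [<-|hi] pi; [lra|]. auto.
  - destruct hj as [Hja|hj]; [subst a|exfalso; apply E; eauto].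
    exists j; split; [left; auto|split; auto]. intros i [<-|hi] pi; [lra|]. exfalso; apply E; eauto.
Qed.

Lemma fin_max (Q : nat -> Prop) (g : nat -> R) : fin Q -> (exists j, Q j) ->
  exists j, Q j /\ forall i, Q i -> g i <= g j.
Proof.
  intros F [j0 q0]. destruct (fin_list Q F) as [l [_ [_ E]]].
  destruct (list_min l Q (fun j => - g j)) as [j [hj [pj H]]].
  { exists j0; split; auto; apply E; auto. }
  exists j; split; auto. intros i qi. specialize (H i (proj2 (E i) qi) qi). lra.
Qed.

Lemma cnt_empty (Q : nat -> Prop) : (forall j, ~ Q j) -> cnt Q = 0%nat.
Proof. intros H. rewrite (cnt_eq Q 0). reflexivity. intros j h; exfalso; eapply H; eauto. Qed.

Section OS.
Variable u : nat -> R.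
Definition Finu := forall a, a < 0 -> fin (fun j => u j <= a).
Definition C a := cnt (fun j => u j <= a).
Definition Lspec k v := v <= 0 /\ forall a, a < 0 -> ((k <= C a)%nat <-> v <= a).
Definition Lk k := epsilon (inhabits 0) (Lspec k).

Hypothesis Hf : Finu.

Lemma C_mono a b : b < 0 -> a <= b -> (C a <= C b)%nat.
Proof. intros hb hab. unfold C. apply cnt_mono. apply Hf; auto. intros j; lra. Qed.

Lemma C_max a : a < 0 -> (1 <= C a)%nat -> exists w, w <= a /\ C w = C a /\ exists j, u j = w.
Proof.
  intros ha h. assert (Ex : exists j, u j <= a).
  { apply NNPP; intro N. unfold C in h. rewrite cnt_empty in h; [lia|]. intros j hj; apply N; eauto. }
  destruct (fin_max _ u (Hf a ha) Ex) as [j [hj Hj]].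
  exists (u j); split; auto; split; eauto. unfold C. apply cnt_ext. intros i; split; intro.
  - lra.
  - apply Hj; auto.
Qed.

Lemma Lspec_exists k : (1 <= k)%nat -> exists v, Lspec k v.
Proof.
  intros hk. destruct (classic (exists a, a < 0 /\ (k <= C a)%nat)) as [[a0 [ha0 hc0]]|N].
  - destruct (fin_list _ (Hf a0 ha0)) as [l [_ [_ E]]].
    destruct (list_min l (fun j => (k <= C (u j))%nat) u) as [j [hj [pj Hj]]].
    { destruct (C_max a0 ha0 ltac:(lia)) as [w [hw [Cw [j Hj]]]]. exists j. split.
      - apply E. lra.
      - subst; lia. }
    assert (uj : u j <= a0) by (apply E; auto).
    exists (u j). split; [lra|]. intros a ha. split.
    + intros h. destruct (Rle_dec (u j) a) as [|n]; auto. exfalso.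
      destruct (C_max a ha ltac:(lia)) as [w [hw [Cw [i Hi]]]].
      assert (ui : In i l) by (apply E; lra).
      specialize (Hj i ui ltac:(subst; lia)). lra.
    + intros h. pose proof (C_mono (u j) a ha h). lia.
  - exists 0. split; [lra|]. intros a ha. split; [|lra]. intros h; exfalso; eauto.
Qed.

Lemma Lk_spec k : (1 <= k)%nat -> Lspec k (Lk k).
Proof. intros hk. unfold Lk. apply epsilon_spec. apply Lspec_exists; auto. Qed.

Lemma Lk_le0 k : (1 <= k)%nat -> Lk k <= 0.
Proof. intros hk; exact (proj1 (Lk_spec k hk)). Qed.

Lemma Lk_lower k m : (1 <= k)%nat -> m <= 0 -> (forall j, m <= u j) -> m <= Lk k.
Proof.
  intros hk hm H. destruct (Rle_dec m (Lk k)) as [|n]; auto. exfalso.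
  set (a := (Lk k + m) / 2). assert (ha : a < 0) by (unfold a; lra).
  destruct (Lk_spec k hk) as [_ Hs]. assert (h : Lk k <= a) by (unfold a; lra).
  apply (proj2 (Hs a ha)) in h. unfold C in h. rewrite cnt_empty in h; [lia|].
  intros j hj. specialize (H j). unfold a in hj. lra.
Qed.

Lemma Lk_lt k a : (1 <= k)%nat -> a < 0 -> (Lk k < a <-> (k <= cnt (fun j => (u j < a)%R))%nat).
Proof.
  intros hk ha. destruct (Lk_spec k hk) as [h0 Hs]. split.
  - intros h. assert (hL : Lk k < 0) by lra.
    assert (h1 : (k <= C (Lk k))%nat) by (apply (Hs (Lk k) hL); lra).
    unfold C in h1. eapply Nat.le_trans; [apply h1|]. apply cnt_mono.
    + destruct (Hf a ha) as [M B]. exists M; intros j hj; apply B; lra.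
    + intros j; lra.
  - intros h. assert (Ex : exists j, u j < a).
    { apply NNPP; intro N. rewrite cnt_empty in h; [lia|]. intros j hj; apply N; eauto. }
    assert (Fa : fin (fun j => u j < a)).
    { destruct (Hf a ha) as [M B]. exists M; intros j hj; apply B; lra. }
    destruct (fin_max _ u Fa Ex) as [j [hj Hj]].
    assert (C (u j) = cnt (fun i => u i < a)).
    { unfold C; apply cnt_ext; intros i; split; intro; [lra|apply Hj; auto]. }
    assert (Lk k <= u j) by (apply (Hs (u j)); lra || lia). lra.
Qed.
End OS.

Lemma Lk_cont u w eps k : Finu u -> Finu w -> 0 < eps -> (1 <= k)%nat ->
  (forall a, a < 0 -> a + eps < 0 -> (C u a <= C w (a + eps))%nat) ->
  (forall a, a < 0 -> a + eps < 0 -> (C w a <= C u (a + eps))%nat) ->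
  Rabs (Lk u k - Lk w k) <= eps.
Proof.
  intros Fu Fw he hk H1 H2.
  assert (G : forall u w, Finu u -> Finu w ->
     (forall a, a < 0 -> a + eps < 0 -> (C u a <= C w (a + eps))%nat) -> Lk w k <= Lk u k + eps).
  { clear Fu Fw H1 H2 u w. intros u w Fu Fw H. destruct (Rle_dec (Lk w k) (Lk u k + eps)) as [|n]; auto. exfalso.
    destruct (Lk_spec u Fu k hk) as [hu Su]. destruct (Lk_spec w Fw k hk) as [hw Sw].
    assert (hL : Lk u k < 0) by lra.
    assert (c1 : (k <= C u (Lk u k))%nat) by (apply Su; lra).
    specialize (H (Lk u k) hL ltac:(lra)).
    assert (c2 : Lk w k <= Lk u k + eps) by (apply Sw; [lra|lia]). lra. }
  pose proof (G u w Fu Fw H1). pose proof (G w u Fw Fu H2).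
  apply Rabs_le; lra.
Qed.

Lemma ncnt_range p q n : (n <= q)%nat -> ncnt (fun k => (p <= k /\ k < q)%nat) n = (n - p)%nat.
Proof.
  induction n; intros h; auto. rewrite ncnt_S, IHn by lia.
  destruct (Nat.le_gt_cases p n).
  - rewrite (proj2 (decb_true _)) by lia. lia.
  - rewrite (proj2 (decb_false _)) by lia. lia.
Qed.

Lemma Lk_count u a : Finu u -> a < 0 ->
  fin (fun j => u j = a) /\ fin (fun k => Lk u (Datatypes.S k) = a) /\
  cnt (fun k => Lk u (Datatypes.S k) = a) = cnt (fun j => u j = a).
Proof.
  intros Fu ha. destruct (Fu a ha) as [M B].
  set (p := cnt (fun j => (u j < a)%R)). set (q := C u a).
  assert (Hq : q = (p + cnt (fun j => u j = a))%nat).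
  { unfold q, C, p. rewrite (cnt_eq _ M B), (cnt_eq (fun j => (u j < a)%R) M), (cnt_eq (fun j => u j = a) M).
    - rewrite <- ncnt_add by (intros; lra). apply ncnt_ext; intros; lra.
    - intros j hj; apply B; lra.
    - intros j hj; apply B; lra. }
  assert (E : forall k, Lk u (Datatypes.S k) = a <-> (p <= k /\ k < q)%nat).
  { intros k. destruct (Lk_spec u Fu (Datatypes.S k) ltac:(lia)) as [_ Sp].
    pose proof (Sp a ha) as S1. pose proof (Lk_lt u Fu (Datatypes.S k) a ltac:(lia) ha) as S2.
    fold p in S2. fold (C u a) in S1; fold q in S1. split.
    - intros e. split.
      + destruct (Nat.le_gt_cases p k); auto. exfalso. assert (Lk u (Datatypes.S k) < a) by (apply S2; lia). lra.
      + assert (k < q)%nat by (apply S1; lra). lia.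
    - intros [h1 h2]. assert (Lk u (Datatypes.S k) <= a) by (apply S1; lia).
      destruct (Rlt_dec (Lk u (Datatypes.S k)) a) as [l|l]; [apply S2 in l; lia|lra]. }
  split; [exists M; intros j hj; apply B; lra|]. split.
  - exists q. intros k hk. apply E in hk; lia.
  - rewrite (cnt_eq _ q) by (intros k hk; apply E in hk; lia).
    rewrite (ncnt_ext _ (fun k => (p <= k /\ k < q)%nat)) by (intros; apply E).
    rewrite ncnt_range by lia. lia.
Qed.

Open Scope R_scope.

Lemma sumn_S (f : nat -> R) n : sum_n f (S n) = sum_n f n + f (S n).
Proof. rewrite sum_Sn. reflexivity. Qed.

Lemma sumn_nonneg (f : nat -> R) n : (forall j, 0 <= f j) -> 0 <= sum_n f n.
Proof. intros H; induction n. rewrite sum_O; auto. rewrite sumn_S. specialize (H (S n)); lra. Qed.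

Lemma sumn_mono (f : nat -> R) n m : (forall j, 0 <= f j) -> (n <= m)%nat -> sum_n f n <= sum_n f m.
Proof. intros H; induction 1; [lra|]. rewrite sumn_S. specialize (H (S m)); lra. Qed.

Lemma sumn_term (f : nat -> R) n : (forall j, 0 <= f j) -> f n <= sum_n f n.
Proof. intros H; destruct n. rewrite sum_O; lra. rewrite sumn_S. pose proof (sumn_nonneg f n H); lra. Qed.

Lemma sumn_le_lim (f : nat -> R) N : (forall j, 0 <= f j) -> Rbar_le (sum_n f N) (Lim_seq (fun M => sum_n f M)).
Proof.
  intros H. rewrite <- (Lim_seq_const (sum_n f N)). apply Lim_seq_le_loc.
  exists N. intros n hn. apply sumn_mono; auto.
Qed.

Lemma cost_lt s t c : Rbar_lt (enum_cost s t) (Finite c) ->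
  forall N, sum_n (fun j => tdist (s j) (t j)) N < c.
Proof.
  intros H N. pose proof (sumn_le_lim (fun j => tdist (s j) (t j)) N (fun j => tdist_pos _ _)).
  unfold enum_cost in H. destruct (Lim_seq _); simpl in *; lra.
Qed.

Lemma cost_term s t c : Rbar_lt (enum_cost s t) (Finite c) -> forall j, tdist (s j) (t j) < c.
Proof.
  intros H j. pose proof (cost_lt s t c H j). pose proof (sumn_term (fun j => tdist (s j) (t j)) j (fun j => tdist_pos _ _)).
  simpl in *; lra.
Qed.

Lemma cost_fin s t : Rbar_lt (enum_cost s t) p_infty -> exists B, forall N, sum_n (fun j => tdist (s j) (t j)) N <= B.
Proof.
  intros H. unfold enum_cost in H.
  pose proof (sumn_le_lim (fun j => tdist (s j) (t j)) 0 (fun j => tdist_pos _ _)) as H0.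
  destruct (Lim_seq _) eqn:E; simpl in *; try tauto.
  exists r. intros N. pose proof (sumn_le_lim (fun j => tdist (s j) (t j)) N (fun j => tdist_pos _ _)).
  rewrite E in H1. simpl in H1; auto.
Qed.

Lemma rdist_lt S T c : Rbar_lt (rdist S T) c ->
  exists s t, is_enumeration S s /\ is_enumeration T t /\ Rbar_lt (enum_cost s t) c.
Proof.
  intros H. apply NNPP; intro N. unfold rdist, Rbar_glb in H.
  destruct (Rbar_ex_glb _) as [l [LB G]]; simpl in H.
  assert (Rbar_le c l).
  { apply G. intros x [s [t [hs [ht ->]]]]. destruct (Rbar_le_lt_dec c (enum_cost s t)); auto.
    exfalso; apply N; eauto. }
  apply (Rbar_lt_not_le _ _ H H0).
Qed.

Lemma enum_one t : is_enumeration rigged_one t -> forall j, t j = Tone.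
Proof.
  intros H j. specialize (H (t j)). unfold rigged_one in H.
  destruct excluded_middle_informative; auto.
  destruct H as [l [_ [L E]]]. destruct l; simpl in L; [|discriminate].
  exfalso; apply (proj2 (E j)); auto.
Qed.

Lemma S1_enum S : in_S1 S -> exists s B, is_enumeration S s /\ forall N, sum_n (fun j => tdist (s j) Tone) N <= B.
Proof.
  intros [_ H]. destruct (rdist_lt _ _ _ H) as [s [t [hs [ht hc]]]].
  destruct (cost_fin s t hc) as [B HB]. exists s, B. split; auto.
  intros N. specialize (HB N). rewrite (sum_n_ext _ (fun j => tdist (s j) (t j))); auto.
  intros j. rewrite (enum_one t ht j); auto.
Qed.

Lemma S_none S x : in_S_infty S -> S x = None -> x = Tone.
Proof.
  intros [_ [_ H]] E. apply H. intros e he [l Hl]. destruct (Hl x) as [A _].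
  rewrite tdist_refl; auto. tauto.
Qed.

Lemma ncnt_sum (c : nat -> R) d n : (forall j, 0 <= c j) ->
  INR (ncnt (fun j => d <= c j) (S n)) * d <= sum_n c n + (if Rle_dec 0 d then 0 else 0).
Proof. Abort.

Lemma ncnt_sum (c : nat -> R) d n : 0 < d -> (forall j, 0 <= c j) ->
  INR (ncnt (fun j => d <= c j) (S n)) * d <= sum_n c n.
Proof.
  intros hd H. induction n.
  - rewrite sum_O, ncnt_S, ncnt_0. simpl. destruct (classic (d <= c 0%nat)).
    + rewrite (proj2 (decb_true _)) by auto. simpl. lra.
    + rewrite (proj2 (decb_false _)) by auto. simpl. specialize (H 0%nat); lra.
  - rewrite sumn_S, ncnt_S, plus_INR. destruct (classic (d <= c (S n))).
    + rewrite (proj2 (decb_true _)) by auto. simpl. lra.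
    + rewrite (proj2 (decb_false _)) by auto. simpl. specialize (H (S n)); lra.
Qed.

Lemma far_fin (c : nat -> R) B d : 0 < d -> (forall j, 0 <= c j) -> (forall N, sum_n c N <= B) ->
  fin (fun j => d <= c j).
Proof.
  intros hd H HB. apply NNPP; intro F. apply not_fin_inf in F.
  destruct (INR_unbounded (B / d)) as [k hk].
  destruct (inf_ncnt _ F k) as [M HM]. destruct M. rewrite ncnt_0 in HM; lia.
  pose proof (ncnt_sum c d M hd H). specialize (HB M).
  apply lt_INR in HM. assert (B / d * d = B) by (field; lra).
  assert (INR k * d < INR (ncnt (fun j : nat => d <= c j) (S M)) * d) by (apply Rmult_lt_compat_r; lra).
  assert (B / d * d < INR k * d) by (apply Rmult_lt_compat_r; lra). lra.
Qed.

Open Scope R_scope.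

Definition lift (al : R) (x : Tpt) : R :=
  epsilon (inhabits 0) (fun t => al - 2 * PI < t <= al /\ x = pt t).

Lemma lift_spec al x : al - 2 * PI < lift al x <= al /\ x = pt (lift al x).
Proof. unfold lift. apply epsilon_spec. apply pt_exists. Qed.

Lemma lift_pt al t : al - 2 * PI < t <= al -> lift al (pt t) = t.
Proof.
  intros h. destruct (lift_spec al (pt t)) as [h' E].
  apply pt_inj; [apply Rabs_def1; lra|]. auto.
Qed.

Lemma lift_eq al x y : lift al x = lift al y -> x = y.
Proof. intros E. rewrite (proj2 (lift_spec al x)), (proj2 (lift_spec al y)), E; auto. Qed.

Lemma tdist_pt_big a b : Rabs (a - b) <= 2 * PI -> Rmin (Rabs (a - b)) (2 * PI - Rabs (a - b)) <= tdist (pt a) (pt b).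
Proof.
  intros h. rewrite tdist_pt. destruct (Rle_dec (Rabs (a - b)) PI).
  - rewrite acos_cos_abs by lra. apply Rmin_l.
  - rewrite acos_cos_big by lra. apply Rmin_r.
Qed.

Section Cut.
Variable al : R.
Hypothesis Hal : PI / 2 <= al <= 3 * PI / 2.

Lemma PI_pos' : 0 < PI. Proof. apply PI_RGT_0. Qed.

Lemma lift_one : lift al Tone = 0.
Proof. rewrite <- pt0. apply lift_pt. pose proof PI_pos'. lra. Qed.

Lemma one_far : PI / 2 <= tdist Tone (pt al).
Proof.
  pose proof PI_pos'. rewrite <- pt0.
  pose proof (tdist_pt_big 0 al). rewrite Rabs_minus_sym, Rminus_0_r, Rabs_pos_eq in H0 by lra.
  specialize (H0 ltac:(lra)). apply Rmin_glb_lt_iff in H0 || idtac.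
  eapply Rle_trans; [|apply H0]. apply Rmin_glb; lra.
Qed.

Lemma lift_gap x eta : 0 < eta <= PI -> eta <= tdist x (pt al) ->
  al - 2 * PI + eta <= lift al x <= al - eta.
Proof.
  intros he H. destruct (lift_spec al x) as [h E]. rewrite E in H.
  set (t := lift al x) in *. rewrite tdist_sym in H.
  rewrite tdist_pt in H. rewrite Rabs_minus_sym in * || idtac.
  destruct (Rle_dec (al - t) PI).
  - rewrite acos_cos_abs in H by (rewrite Rabs_pos_eq; lra). rewrite Rabs_pos_eq in H by lra. lra.
  - rewrite acos_cos_big in H by (rewrite Rabs_pos_eq; lra). rewrite Rabs_pos_eq in H by lra. lra.
Qed.

Lemma lift_dist x y eta : 0 < eta <= PI / 2 -> eta <= tdist x (pt al) -> eta <= tdist y (pt al) ->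
  tdist x y < eta -> Rabs (lift al x - lift al y) = tdist x y.
Proof.
  intros he Hx Hy Hd. pose proof PI_pos'.
  pose proof (lift_gap x eta ltac:(lra) Hx). pose proof (lift_gap y eta ltac:(lra) Hy).
  rewrite (proj2 (lift_spec al x)), (proj2 (lift_spec al y)) in Hd |- *.
  rewrite (lift_pt al (lift al x)), (lift_pt al (lift al y)) by (apply lift_spec).
  assert (hb : Rabs (lift al x - lift al y) <= 2 * PI - 2 * eta) by (apply Rabs_le; lra).
  rewrite tdist_pt in *. destruct (Rle_dec (Rabs (lift al x - lift al y)) PI).
  - rewrite acos_cos_abs; lra.
  - rewrite acos_cos_big in Hd by lra. lra.
Qed.

Lemma rmin_helper a b c d : c <= a -> d <= b -> Rmin c d <= Rmin a b.
Proof. intros. unfold Rmin. repeat destruct Rle_dec; lra. Qed.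

Lemma lift_neg_far x a : a < 0 -> lift al x <= a -> Rmin (- a) (PI / 2) <= tdist x Tone.
Proof.
  intros ha h. pose proof PI_pos'. destruct (lift_spec al x) as [hw E]. rewrite E, <- pt0.
  assert (Rabs (lift al x - 0) = - lift al x) by (rewrite Rminus_0_r, Rabs_left; lra).
  eapply Rle_trans; [|apply tdist_pt_big; lra]. rewrite H0. apply rmin_helper; lra.
Qed.

Lemma lift_pos_far x a : a < 0 -> - lift al x <= a -> Rmin (- a) (PI / 2) <= tdist x Tone.
Proof.
  intros ha h. pose proof PI_pos'. destruct (lift_spec al x) as [hw E]. rewrite E, <- pt0.
  assert (Rabs (lift al x - 0) = lift al x) by (rewrite Rminus_0_r, Rabs_pos_eq; lra).
  eapply Rle_trans; [|apply tdist_pt_big; lra]. rewrite H0. apply rmin_helper; lra.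
Qed.

Lemma Finu_lift (s : nat -> Tpt) B : (forall N, sum_n (fun j => tdist (s j) Tone) N <= B) ->
  Finu (fun j => lift al (s j)) /\ Finu (fun j => - lift al (s j)).
Proof.
  intros HB. pose proof PI_pos'. split; intros a ha.
  - destruct (far_fin (fun j => tdist (s j) Tone) B (Rmin (- a) (PI / 2))) as [M HM]; auto.
    + apply Rmin_glb_lt; lra.
    + intros; apply tdist_pos.
    + exists M. intros j hj. apply HM. apply (lift_neg_far (s j) a); auto.
  - destruct (far_fin (fun j => tdist (s j) Tone) B (Rmin (- a) (PI / 2))) as [M HM]; auto.
    + apply Rmin_glb_lt; lra.
    + intros; apply tdist_pos.
    + exists M. intros j hj. apply HM. apply (lift_pos_far (s j) a); auto.
Qed.
End Cut.

Open Scope R_scope.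

Lemma enum_support (S : rigged) s j : is_enumeration S s -> S (s j) <> Some 0%nat.
Proof.
  intros H E. specialize (H (s j)). rewrite E in H. destruct H as [l [_ [L I]]].
  destruct l; [|discriminate]. apply (proj2 (I j)); auto.
Qed.

Lemma cnt_transfer (S : rigged) e f (P : Tpt -> Prop) : is_enumeration S e -> is_enumeration S f ->
  fin (fun j => P (e j)) -> fin (fun j => P (f j)) /\ cnt (fun j => P (f j)) = cnt (fun j => P (e j)).
Proof.
  intros He Hf F. destruct (enum_bij S f e Hf He) as [pi [sg [H1 [H2 H3]]]].
  destruct (bij_fin pi sg H1 H2 (fun i => P (e i)) F) as [A B].
  assert (E : forall j, P (e (pi j)) <-> P (f j)) by (intros j; rewrite H3; tauto).
  split.
  - destruct A as [M HM]. exists M. intros j hj. apply HM, E; auto.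
  - rewrite <- B. apply cnt_ext. intros j; rewrite E; tauto.
Qed.

Lemma image_cnt (P : nat -> Prop) (g : nat -> nat) : (forall a b, g a = g b -> a = b) -> fin P ->
  fin (fun i => exists k, i = g k /\ P k) /\ cnt (fun i => exists k, i = g k /\ P k) = cnt P.
Proof.
  intros Hg F. destruct (fin_list P F) as [l [N [L E]]].
  destruct (list_fin (fun i => exists k, i = g k /\ P k) (map g l)) as [A B].
  - apply NoDup_map_NoDup_ForallPairs; auto. intros a b _ _; auto.
  - intros i. rewrite in_map_iff. split.
    + intros [k [<- hk]]. exists k; split; auto. apply E; auto.
    + intros [k [-> hk]]. exists k; split; auto. apply E; auto.
  - split; auto. rewrite B, length_map; auto.
Qed.

Lemma divmod3 k c : (c < 3)%nat -> ((3 * k + c) / 3 = k /\ (3 * k + c) mod 3 = c)%nat.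
Proof.
  intros h. split.
  - symmetry. apply (Nat.div_unique _ _ _ c); lia.
  - symmetry. apply (Nat.mod_unique _ _ k); lia.
Qed.

Lemma decomp3 i : exists k c, (c < 3 /\ i = 3 * k + c)%nat.
Proof. exists (i / 3)%nat, (i mod 3)%nat. split. apply Nat.mod_upper_bound; lia. apply Nat.div_mod; lia. Qed.

Definition zsel (al : R) (s : nat -> Tpt) (i : nat) : Tpt :=
  match (i mod 3)%nat with
  | 0%nat => pt (Lk (fun j => lift al (s j)) (S (i / 3)))
  | 1%nat => pt (- Lk (fun j => - lift al (s j)) (S (i / 3)))
  | _ => Tone
  end.

Lemma zsel0 al s k : zsel al s (3 * k) = pt (Lk (fun j => lift al (s j)) (S k)).
Proof. unfold zsel. destruct (divmod3 k 0 ltac:(lia)) as [A B]. rewrite Nat.add_0_r in A, B. rewrite A, B; auto. Qed.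
Lemma zsel1 al s k : zsel al s (3 * k + 1) = pt (- Lk (fun j => - lift al (s j)) (S k)).
Proof. unfold zsel. destruct (divmod3 k 1 ltac:(lia)) as [A B]. rewrite A, B; auto. Qed.
Lemma zsel2 al s k : zsel al s (3 * k + 2) = Tone.
Proof. unfold zsel. destruct (divmod3 k 2 ltac:(lia)) as [A B]. rewrite B; auto. Qed.

Definition Gap (al eta : R) (S : rigged) := forall x, S x <> Some 0%nat -> eta <= tdist x (pt al).

Section Sel.
Variables (al eta : R) (RS : rigged) (s : nat -> Tpt) (B : R).
Hypotheses (Hal : PI / 2 <= al <= 3 * PI / 2) (Heta : 0 < eta <= PI / 2)
  (HS : in_S_infty RS) (Hs : is_enumeration RS s)
  (HB : forall N, sum_n (fun j => tdist (s j) Tone) N <= B) (HG : Gap al eta RS).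

Let u := fun j => lift al (s j).
Let v := fun j => - lift al (s j).

Lemma u_bounds j : al - 2 * PI + eta <= u j <= al - eta.
Proof. unfold u. apply lift_gap; auto. pose proof PI_pos'; lra. apply HG, (enum_support RS); auto. Qed.

Lemma Lu_window k : al - 2 * PI < Lk u (S k) <= al /\ Lk u (S k) <= 0.
Proof.
  pose proof PI_pos'. destruct (Finu_lift al Hal s B HB) as [Fu Fv]. fold u in Fu.
  pose proof (Lk_le0 u Fu (S k) ltac:(lia)).
  assert (al - 2 * PI + eta <= Lk u (S k)).
  { apply Lk_lower; auto; try lia; try lra. intros j; apply u_bounds. }
  repeat split; lra.
Qed.

Lemma Lv_window k : 0 <= - Lk v (S k) <= al - eta.
Proof.
  pose proof PI_pos'. destruct (Finu_lift al Hal s B HB) as [Fu Fv]. fold v in Fv.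
  pose proof (Lk_le0 v Fv (S k) ltac:(lia)).
  assert (- (al - eta) <= Lk v (S k)).
  { apply Lk_lower; auto; try lia; try lra. intros j; unfold v; pose proof (u_bounds j); unfold u in *; lra. }
  lra.
Qed.

Lemma zsel_enum : is_enumeration RS (zsel al s).
Proof.
  pose proof PI_pos'. destruct (Finu_lift al Hal s B HB) as [Fu Fv]. fold u in Fu; fold v in Fv.
  rewrite enum_char. intros x. destruct (RS x) as [n|] eqn:Sx.
  2:{ apply S_none in Sx; auto. subst x. intros N. exists (3 * N + 2)%nat. split; [lia|]. apply zsel2. }
  assert (hx : x <> Tone) by (intros ->; destruct HS as [E _]; congruence).
  pose proof (proj1 (enum_char RS s) Hs x) as Ex. rewrite Sx in Ex. destruct Ex as [Fx Cx].
  set (t := lift al x). destruct (lift_spec al x) as [tw tx]. fold t in tw, tx.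
  assert (t0 : t <> 0) by (intros e; apply hx; rewrite tx, e, pt0; auto).

  destruct (Rlt_le_dec t 0) as [tn|tp].
  - destruct (Lk_count u t Fu tn) as [F1 [F2 C2]].
    assert (E1 : forall j, u j = t <-> s j = x).
    { intros j; unfold u, t; split; intro e; [apply (lift_eq al); auto|rewrite e; auto]. }
    assert (EZ : forall i, zsel al s i = x <-> exists k, i = (3 * k)%nat /\ Lk u (S k) = t).
    { intros i. destruct (decomp3 i) as [k [c [hc ->]]].
      destruct (Lu_window k) as [w1 w2]. destruct (Lv_window k) as [w3 w4].
      assert (Hc3 : (c = 0 \/ c = 1 \/ c = 2)%nat) by lia; destruct Hc3 as [ -> | [ -> | -> ] ].
      - rewrite Nat.add_0_r, zsel0. split.
        + intros e. exists k; split; auto. apply pt_inj; [apply Rabs_def1; lra|].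
          rewrite <- tx; exact e.
        + intros [k' [e1 e2]]. assert (k' = k) by lia. subst k'. change (pt (Lk u (S k)) = x). rewrite e2; auto.
      - rewrite zsel1. split.
        + intros e. exfalso. assert (- Lk v (S k) = t).
          { apply pt_inj; [apply Rabs_def1; lra|]. rewrite <- tx; exact e. } lra.
        + intros [k' [e1 _]]. lia.
      - rewrite zsel2. split; [intros e; exfalso; apply hx; auto|]. intros [k' [e1 _]]. lia. }
    destruct (image_cnt _ (fun k => 3 * k)%nat ltac:(intros a b h; cbv beta in h; lia) F2) as [F3 C3].
    split.
    + destruct F3 as [M HM]. exists M. intros i hi. apply HM, EZ; auto.
    + rewrite (cnt_ext _ (fun i => exists k, i = (3 * k)%nat /\ Lk u (S k) = t)) by apply EZ.
      rewrite C3, C2, <- Cx. apply cnt_ext. apply E1.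
  - assert (tp' : 0 < t) by lra. clear tp.
    destruct (Lk_count v (- t) Fv ltac:(lra)) as [F1 [F2 C2]].
    assert (E1 : forall j, v j = - t <-> s j = x).
    { intros j; unfold v, t; split; intro e; [apply (lift_eq al); lra|rewrite e; auto]. }
    assert (EZ : forall i, zsel al s i = x <-> exists k, i = (3 * k + 1)%nat /\ Lk v (S k) = - t).
    { intros i. destruct (decomp3 i) as [k [c [hc ->]]].
      destruct (Lu_window k) as [w1 w2]. destruct (Lv_window k) as [w3 w4].
      assert (Hc3 : (c = 0 \/ c = 1 \/ c = 2)%nat) by lia; destruct Hc3 as [ -> | [ -> | -> ] ].
      - rewrite Nat.add_0_r, zsel0. split.
        + intros e. exfalso. assert (Lk u (S k) = t).
          { apply pt_inj; [apply Rabs_def1; lra|]. rewrite <- tx; exact e. } lra.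
        + intros [k' [e1 _]]. lia.
      - rewrite zsel1. split.
        + intros e. exists k; split; auto. assert (- Lk v (S k) = t).
          { apply pt_inj; [apply Rabs_def1; lra|]. rewrite <- tx; exact e. } lra.
        + intros [k' [e1 e2]]. assert (k' = k) by lia. subst k'. change (pt (- Lk v (S k)) = x). rewrite e2, Ropp_involutive; auto.
      - rewrite zsel2. split; [intros e; exfalso; apply hx; auto|]. intros [k' [e1 _]]. lia. }
    destruct (image_cnt _ (fun k => 3 * k + 1)%nat ltac:(intros a b h; cbv beta in h; lia) F2) as [F3 C3].
    split.
    + destruct F3 as [M HM]. exists M. intros i hi. apply HM, EZ; auto.
    + rewrite (cnt_ext _ (fun i => exists k, i = (3 * k + 1)%nat /\ Lk v (S k) = - t)) by apply EZ.
      rewrite C3, C2, <- Cx. apply cnt_ext. apply E1.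
Qed.
End Sel.

Open Scope R_scope.

Lemma support_index (RS : rigged) t x : is_enumeration RS t -> RS x <> Some 0%nat -> exists j, t j = x.
Proof.
  intros H hx. specialize (H x). destruct (RS x) as [n|].
  - destruct H as [l [_ [L E]]]. destruct l as [|j l]. simpl in L; subst; tauto.
    exists j. apply E; left; auto.
  - destruct (H 0%nat) as [j [_ e]]; eauto.
Qed.

Lemma gap_prop al eta S0 S1 : 0 < eta -> Gap al eta S0 -> Rbar_lt (rdist S0 S1) (Finite (eta / 2)) ->
  Gap al (eta / 2) S1.
Proof.
  intros he G H. destruct (rdist_lt _ _ _ H) as [s [t [hs [ht hc]]]].
  intros x hx. destruct (support_index S1 t x ht hx) as [j <-].
  pose proof (cost_term s t _ hc j). pose proof (G (s j) (enum_support S0 s j hs)).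
  pose proof (tdist_triangle (s j) (t j) (pt al)). lra.
Qed.

Lemma zsel_close al eta (S1 S2 : rigged) s1 s2 B1 B2 e :
  PI / 2 <= al <= 3 * PI / 2 -> 0 < eta <= PI / 2 -> 0 < e <= eta ->
  in_S_infty S1 -> in_S_infty S2 -> is_enumeration S1 s1 -> is_enumeration S2 s2 ->
  (forall N, sum_n (fun j => tdist (s1 j) Tone) N <= B1) ->
  (forall N, sum_n (fun j => tdist (s2 j) Tone) N <= B2) ->
  Gap al eta S1 -> Gap al eta S2 -> Rbar_lt (rdist S1 S2) (Finite e) ->
  forall i, tdist (zsel al s1 i) (zsel al s2 i) <= e.
Proof.
  intros Hal Heta He HS1 HS2 Hs1 Hs2 HB1 HB2 G1 G2 Hd.
  destruct (rdist_lt _ _ _ Hd) as [s [t [hs [ht hc]]]].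
  assert (D : forall j, Rabs (lift al (s j) - lift al (t j)) < e).
  { intros j. pose proof (cost_term s t _ hc j).
    rewrite lift_dist with (eta := eta); auto; try lra.
    apply G1, (enum_support S1); auto. apply G2, (enum_support S2); auto. }
  destruct (Finu_lift al Hal s1 B1 HB1) as [Fu1 Fv1].
  destruct (Finu_lift al Hal s2 B2 HB2) as [Fu2 Fv2].
  assert (T : forall (f : Tpt -> R) (S1 S2 : rigged) s1 s s2 t,
    is_enumeration S1 s1 -> is_enumeration S1 s -> is_enumeration S2 s2 -> is_enumeration S2 t ->
    Finu (fun j => f (s1 j)) -> Finu (fun j => f (s2 j)) ->
    (forall j, Rabs (f (s j) - f (t j)) < e) ->
    forall a, a < 0 -> a + e < 0 -> (C (fun j => f (s1 j)) a <= C (fun j => f (s2 j)) (a + e))%nat).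
  { clear - He. intros f S1 S2 s1 s s2 t h1 h h2 ht F1 F2 D a ha hae. unfold C.
    destruct (cnt_transfer S1 s1 s (fun y => f y <= a) h1 h (F1 a ha)) as [A1 A2].
    destruct (cnt_transfer S2 s2 t (fun y => f y <= a + e) h2 ht (F2 _ hae)) as [B1 B2].
    rewrite <- A2, <- B2. apply cnt_mono; auto. intros j hj. specialize (D j).
    apply Rabs_def2 in D. lra. }
  assert (Lu : forall k, (1 <= k)%nat -> Rabs (Lk (fun j => lift al (s1 j)) k - Lk (fun j => lift al (s2 j)) k) <= e).
  { intros k hk. apply Lk_cont; auto; try lra.
    - apply (T (lift al) S1 S2 s1 s s2 t); auto.
    - apply (T (lift al) S2 S1 s2 t s1 s); auto. intros j; rewrite Rabs_minus_sym; auto. }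
  assert (Lv : forall k, (1 <= k)%nat -> Rabs (Lk (fun j => - lift al (s1 j)) k - Lk (fun j => - lift al (s2 j)) k) <= e).
  { intros k hk. apply Lk_cont; auto; try lra.
    - apply (T (fun y => - lift al y) S1 S2 s1 s s2 t); auto.
      intros j. replace (- lift al (s j) - - lift al (t j)) with (- (lift al (s j) - lift al (t j))) by ring.
      rewrite Rabs_Ropp; auto.
    - apply (T (fun y => - lift al y) S2 S1 s2 t s1 s); auto.
      intros j. replace (- lift al (t j) - - lift al (s j)) with (lift al (s j) - lift al (t j)) by ring. auto. }
  intros i. destruct (decomp3 i) as [k [c [hc3 ->]]].
  assert (Hc3 : (c = 0 \/ c = 1 \/ c = 2)%nat) by lia; destruct Hc3 as [ -> | [ -> | -> ] ].
  - rewrite Nat.add_0_r, !zsel0. eapply Rle_trans; [apply tdist_pt_le|]. apply Lu; lia.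
  - rewrite !zsel1. eapply Rle_trans; [apply tdist_pt_le|].
    replace (- Lk (fun j => - lift al (s1 j)) (S k) - - Lk (fun j => - lift al (s2 j)) (S k))
      with (- (Lk (fun j => - lift al (s1 j)) (S k) - Lk (fun j => - lift al (s2 j)) (S k))) by ring.
    rewrite Rabs_Ropp. apply Lv; lia.
  - rewrite !zsel2, tdist_refl. lra.
Qed.

Open Scope R_scope.

Lemma INR_sep a b : a <> b -> 1 <= Rabs (INR a - INR b).
Proof.
  intros h. destruct (Nat.lt_gt_cases a b) as [[l|l] _]; auto.
  - apply le_INR in l. rewrite S_INR in l. rewrite Rabs_left1 by lra. lra.
  - apply le_INR in l. rewrite S_INR in l. rewrite Rabs_pos_eq by lra. lra.
Qed.

Lemma choose_cut (S0 : rigged) s0 B : is_enumeration S0 s0 ->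
  (forall N, sum_n (fun j => tdist (s0 j) Tone) N <= B) ->
  exists al eta, PI / 2 <= al <= 3 * PI / 2 /\ 0 < eta <= PI / 4 /\ Gap al eta S0.
Proof.
  intros Hs HB. pose proof PI_RGT_0 as Hpi.
  assert (FF : fin (fun j => PI / 4 <= tdist (s0 j) Tone)).
  { apply (far_fin _ B); auto; try lra. intros; apply tdist_pos. }
  destruct (fin_list _ FF) as [lF [NF [LF EF]]].
  set (m := length lF). set (h := PI / (INR m + 1)). set (eta := h / 4).
  assert (hm : 0 <= INR m) by apply pos_INR.
  assert (hh : 0 < h) by (unfold h; apply Rdiv_lt_0_compat; lra).
  assert (hmh : INR m * h < PI).
  { unfold h. replace (INR m * (PI / (INR m + 1))) with (PI * (INR m / (INR m + 1))) by (field; lra).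
    assert (INR m / (INR m + 1) < 1) by (apply Rmult_lt_reg_r with (INR m + 1); [lra|]; field_simplify; lra).
    nra. }
  assert (hhp : h <= PI) by (unfold h; apply Rmult_le_reg_r with (INR m + 1); [lra|]; field_simplify; nra).
  set (cand := fun i : nat => PI / 2 + INR i * h).
  assert (Ex : exists i, (i <= m)%nat /\ forall j, In j lF -> eta <= tdist (s0 j) (pt (cand i))).
  { apply NNPP; intro N.
    assert (G : forall i, (i <= m)%nat -> exists j, In j lF /\ tdist (s0 j) (pt (cand i)) < eta).
    { intros i hi. apply NNPP; intro N2. apply N. exists i; split; auto. intros j hj.
      destruct (Rle_dec eta (tdist (s0 j) (pt (cand i)))); auto. exfalso; apply N2; exists j; split; auto; lra. }
    set (g := fun i => epsilon (inhabits 0%nat) (fun j => In j lF /\ tdist (s0 j) (pt (cand i)) < eta)).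
    assert (Gs : forall i, (i <= m)%nat -> In (g i) lF /\ tdist (s0 (g i)) (pt (cand i)) < eta).
    { intros i hi. unfold g. apply epsilon_spec. apply G; auto. }
    assert (ND : NoDup (map g (seq 0 (S m)))).
    { apply NoDup_map_NoDup_ForallPairs; [|apply seq_NoDup]. intros a b ha hb e.
      apply in_seq in ha; apply in_seq in hb.
      destruct (Gs a ltac:(lia)) as [_ da]. destruct (Gs b ltac:(lia)) as [_ db].
      rewrite e in da. rewrite tdist_sym in da.
      pose proof (tdist_triangle (pt (cand a)) (s0 (g b)) (pt (cand b))).
      destruct (Nat.eq_dec a b) as [|ne]; auto. exfalso.
      pose proof (INR_sep a b ne).
      assert (Ab : Rabs (INR a - INR b) <= INR m).
      { pose proof (le_INR a m ltac:(lia)). pose proof (le_INR b m ltac:(lia)). pose proof (pos_INR a). pose proof (pos_INR b).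
        apply Rabs_le; lra. }
      rewrite tdist_pt in H.
      replace (cand a - cand b) with ((INR a - INR b) * h) in H by (unfold cand; ring).
      rewrite acos_cos_abs in H.
      2:{ rewrite Rabs_mult, (Rabs_pos_eq h) by lra. nra. }
      rewrite Rabs_mult, (Rabs_pos_eq h) in H by lra. unfold eta in *. nra. }
    assert (incl (map g (seq 0 (S m))) lF).
    { intros j hj. apply in_map_iff in hj. destruct hj as [i [<- hi]]. apply in_seq in hi. apply Gs; lia. }
    pose proof (NoDup_incl_length ND H) as L. rewrite length_map, length_seq in L. unfold m in L. lia. }
  destruct Ex as [i [hi Hi]]. exists (cand i), eta.
  assert (ci : PI / 2 <= cand i <= 3 * PI / 2).
  { unfold cand. pose proof (le_INR i m hi). pose proof (pos_INR i). nra. }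
  split; auto. split; [unfold eta; lra|].
  intros x hx. destruct (support_index S0 s0 x Hs hx) as [j <-].
  destruct (classic (PI / 4 <= tdist (s0 j) Tone)) as [f|f].
  - apply Hi, EF; auto.
  - pose proof (one_far (cand i) ci). pose proof (tdist_triangle Tone (s0 j) (pt (cand i))).
    rewrite tdist_sym in f. unfold eta; lra.
Qed.

Open Scope R_scope.

Lemma enum_ext (S1 S2 : rigged) z : (forall x, S1 x = S2 x) -> is_enumeration S1 z -> is_enumeration S2 z.
Proof. intros E H x. rewrite <- E. apply H. Qed.

Section Main.
Variable S : R -> rigged.
Hypothesis HS1 : forall r : R, 0 <= r <= 1 -> in_S1 (S r).
Hypothesis Hcont : forall r : R, 0 <= r <= 1 -> forall eps : R, 0 < eps ->
     exists delta : R, 0 < delta /\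
       forall r' : R, 0 <= r' <= 1 -> Rabs (r' - r) < delta ->
         Rbar_lt (rdist (S r) (S r')) (Finite eps).
Hypothesis HS0 : forall x : Tpt, S 0 x = rigged_one x.

Definition sr (r : R) : nat -> Tpt :=
  epsilon (inhabits (fun _ : nat => Tone))
    (fun s => is_enumeration (S r) s /\ exists B, forall N, sum_n (fun j => tdist (s j) Tone) N <= B).

Lemma sr_spec r : 0 <= r <= 1 ->
  is_enumeration (S r) (sr r) /\ exists B, forall N, sum_n (fun j => tdist (sr r j) Tone) N <= B.
Proof.
  intros hr. unfold sr. apply epsilon_spec. destruct (S1_enum (S r) (HS1 r hr)) as [s [B [A C]]].
  exists s; split; eauto.
Qed.

Definition InI r0 d r := 0 <= r <= 1 /\ Rabs (r - r0) < d.

Lemma local r0 : 0 <= r0 <= 1 -> exists d, 0 < d /\ exists w : nat -> R -> Tpt,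
  (forall r, InI r0 d r -> is_enumeration (S r) (fun j => w j r)) /\
  (forall j r, InI r0 d r -> forall eps, 0 < eps -> exists del, 0 < del /\
     forall r', InI r0 d r' -> Rabs (r' - r) < del -> tdist (w j r) (w j r') < eps).
Proof.
  intros hr0. pose proof PI_RGT_0.
  destruct (sr_spec r0 hr0) as [E0 [B0 HB0]].
  destruct (choose_cut (S r0) (sr r0) B0 E0 HB0) as [al [eta [Hal [Heta G0]]]].
  destruct (Hcont r0 hr0 (eta / 2) ltac:(lra)) as [d [hd Hd]].
  assert (GI : forall r, InI r0 d r -> Gap al (eta / 2) (S r)).
  { intros r [hr hrd]. apply (gap_prop al eta (S r0)); try lra; auto. }
  exists d; split; auto. exists (fun j r => zsel al (sr r) j). split.
  - intros r Ir. destruct (sr_spec r (proj1 Ir)) as [E [B HB]].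
    apply (zsel_enum al (eta / 2) (S r) (sr r) B); auto; try lra.
    apply (HS1 r (proj1 Ir)).
  - intros j r Ir eps he.
    destruct (Hcont r (proj1 Ir) (Rmin (eps / 2) (eta / 2))) as [del [hdel Hdel]].
    { apply Rmin_glb_lt; lra. }
    exists del; split; auto. intros r' Ir' hrr.
    destruct (sr_spec r (proj1 Ir)) as [E [B HB]]. destruct (sr_spec r' (proj1 Ir')) as [E' [B' HB']].
    assert (Hm1 := Rmin_l (eps / 2) (eta / 2)). assert (Hm2 := Rmin_r (eps / 2) (eta / 2)).
    assert (Hm3 : 0 < Rmin (eps / 2) (eta / 2)) by (apply Rmin_glb_lt; lra).
    eapply Rle_lt_trans.
    + apply (zsel_close al (eta / 2) (S r) (S r') (sr r) (sr r') B B' (Rmin (eps / 2) (eta / 2))); auto; try lra.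
      * apply (HS1 r (proj1 Ir)).
      * apply (HS1 r' (proj1 Ir')).
      * apply Hdel; auto. apply Ir'.
    + lra.
Qed.

Definition Good t := exists z : nat -> R -> Tpt,
  (forall j r, 0 <= r <= t -> forall eps, 0 < eps -> exists del, 0 < del /\
     forall r', 0 <= r' <= t -> Rabs (r' - r) < del -> tdist (z j r) (z j r') < eps) /\
  (forall r, 0 <= r <= t -> is_enumeration (S r) (fun j => z j r)).

Lemma good0 : Good 0.
Proof.
  exists (fun _ _ => Tone). split.
  - intros j r hr eps he. exists 1; split; [lra|]. intros. rewrite tdist_refl; auto.
  - intros r hr. assert (r = 0) by lra. subst r. apply (enum_ext rigged_one).
    + intros x; rewrite HS0; auto.
    + intros x. unfold rigged_one. destruct excluded_middle_informative.
      * intros N; exists N; split; auto.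
      * exists nil. repeat split; auto. constructor. simpl; tauto. intros h; congruence.
Qed.

Lemma glue t t' r0 d w : 0 <= t -> t <= t' -> t' <= 1 -> Good t ->
  Rabs (t - r0) < d -> Rabs (t' - r0) < d ->
  (forall r, InI r0 d r -> is_enumeration (S r) (fun j => w j r)) ->
  (forall j r, InI r0 d r -> forall eps, 0 < eps -> exists del, 0 < del /\
     forall r', InI r0 d r' -> Rabs (r' - r) < del -> tdist (w j r) (w j r') < eps) ->
  Good t'.
Proof.
  intros ht htt ht' [z [Zc Ze]] h1 h2 We Wc.
  assert (It : InI r0 d t) by (split; [lra|auto]).
  assert (Ibet : forall r, t <= r <= t' -> InI r0 d r).
  { intros r hr. split; [lra|]. apply Rabs_def2 in h1. apply Rabs_def2 in h2. apply Rabs_def1; lra. }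
  destruct (enum_bij (S t) (fun j => z j t) (fun j => w j t)) as [pi [sg [H1 [H2 H3]]]].
  { apply Ze; lra. } { apply We; auto. }
  exists (fun j r => if Rle_dec r t then z j r else w (pi j) r). split.
  - intros j r hr eps he. destruct (Rlt_le_dec r t) as [lt|ge].
    + destruct (Zc j r ltac:(lra) eps he) as [d1 [hd1 Hd1]].
      exists (Rmin d1 (t - r)). split; [apply Rmin_glb_lt; lra|].
      intros r' hr' hrr. pose proof (Rmin_l d1 (t - r)). pose proof (Rmin_r d1 (t - r)).
      apply Rabs_def2 in hrr as hrr'.
      destruct (Rle_dec r t); [|lra]. destruct (Rle_dec r' t); [|lra]. apply Hd1; lra.
    + destruct (Rle_lt_dec r t) as [e|gt].
      * assert (r = t) by lra. subst r.
        destruct (Zc j t ltac:(lra) eps he) as [d1 [hd1 Hd1]].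
        destruct (Wc (pi j) t It eps he) as [d2 [hd2 Hd2]].
        exists (Rmin d1 d2). split; [apply Rmin_glb_lt; lra|].
        intros r' hr' hrr. pose proof (Rmin_l d1 d2). pose proof (Rmin_r d1 d2).
        destruct (Rle_dec t t); [|lra]. destruct (Rle_dec r' t).
        -- apply Hd1; lra.
        -- rewrite <- H3. apply Hd2; [apply Ibet; lra|]. rewrite Rabs_minus_sym in hrr |- *. lra.
      * destruct (Wc (pi j) r (Ibet r ltac:(lra)) eps he) as [d1 [hd1 Hd1]].
        exists (Rmin d1 (r - t)). split; [apply Rmin_glb_lt; lra|].
        intros r' hr' hrr. pose proof (Rmin_l d1 (r - t)). pose proof (Rmin_r d1 (r - t)).
        apply Rabs_def2 in hrr as hrr'.
        destruct (Rle_dec r t); [lra|]. destruct (Rle_dec r' t); [lra|].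
        apply Hd1; [apply Ibet; lra|lra].
  - intros r hr. destruct (Rle_dec r t).
    + apply Ze; lra.
    + apply (bij_enum pi sg H1 H2 (S r) (fun j => w j r)). apply We, Ibet; lra.
Qed.

Lemma good1 : Good 1.
Proof.
  set (E := fun t => 0 <= t <= 1 /\ Good t).
  assert (bE : bound E) by (exists 1; intros x [hx _]; lra).
  destruct (completeness E bE (ex_intro _ 0 (conj (conj (Rle_refl 0) Rle_0_1) good0))) as [T [UB LUB]].
  assert (T0 : 0 <= T) by (apply UB; split; [lra|apply good0]).
  assert (T1 : T <= 1) by (apply LUB; intros x [hx _]; lra).
  destruct (local T (conj T0 T1)) as [d [hd [w [We Wc]]]].
  assert (Ex : exists t, E t /\ T - d < t).
  { apply NNPP; intro N. assert (T <= T - d).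
    { apply LUB. intros x Ex. destruct (Rle_dec x (T - d)); auto. exfalso; apply N; exists x; split; auto; lra. }
    lra. }
  destruct Ex as [t [[ht Gt] htd]].
  assert (tT : t <= T) by (apply UB; split; auto).
  set (t' := Rmin (T + d / 2) 1).
  assert (Gt' : Good t').
  { apply (glue t t' T d w); auto; try lra.
    - unfold t'. apply Rmin_glb; lra.
    - unfold t'. apply Rmin_r.
    - apply Rabs_def1; lra.
    - unfold t'. pose proof (Rmin_l (T + d / 2) 1). pose proof (Rmin_r (T + d / 2) 1).
      assert (T <= Rmin (T + d / 2) 1) by (apply Rmin_glb; lra).
      apply Rabs_def1; lra. }
  assert (t'T : t' <= T).
  { apply UB. split; auto. unfold t'. split; [apply Rmin_glb; lra|apply Rmin_r]. }
  assert (t' = 1).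
  { unfold t' in *. unfold Rmin in *. destruct Rle_dec; lra. }
  rewrite <- H; auto.
Qed.
End Main.

Theorem mainTheorem4 (S : R -> rigged)
  (HS1 : forall r : R, 0 <= r <= 1 -> in_S1 (S r))
  (Hcont : forall r : R, 0 <= r <= 1 -> forall eps : R, 0 < eps ->
     exists delta : R, 0 < delta /\
       forall r' : R, 0 <= r' <= 1 -> Rabs (r' - r) < delta ->
         Rbar_lt (rdist (S r) (S r')) (Finite eps))
  (HS0 : forall x : Tpt, S 0 x = rigged_one x) :
  exists z : nat -> R -> Tpt,
    (forall j : nat,
       forall r : R, 0 <= r <= 1 -> forall eps : R, 0 < eps ->
       exists delta : R, 0 < delta /\
         forall r' : R, 0 <= r' <= 1 -> Rabs (r' - r) < delta ->
           tdist (z j r) (z j r') < eps) /\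
    (forall j : nat, z j 0 = Tone) /\
    (forall r : R, 0 <= r <= 1 -> is_enumeration (S r) (fun j => z j r)).
Proof.
  destruct (good1 S HS1 Hcont HS0) as [z [Zc Ze]]. exists z. split; [|split]; auto.
  intros j. apply (enum_one (fun j => z j 0)). apply (enum_ext (S 0)); auto. apply Ze; lra.
Qed.
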